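(* Let $n\ge3$ and $k\ge0$ be integers with $n\le k$. If $S\subseteq\mathrm{Inc}(A,B)$ is an independent set in $G_n^k$ that is not reversible, then \[|S|\le \frac{(k+1)(k+2)}{2}+2-n.\]
   Context: For integers $n\ge3$, $k\ge0$, the crown $S_n^k$ is the poset with ground set $A\cup B$, $A=\{a_1,\dots,a_{n+k}\}$, $B=\{b_1,\dots,b_{n+k}\}$, indices cyclic modulo $n+k$; elements of $A$ are pairwise incomparable, as are elements of $B$, and $a_i$ is incomparable to $b_j$ when $j\in\{i,i+1,\dots,i+k\}$ (mod $n+k$), while $a_i<b_j$ otherwise. $\mathrm{Inc}(A,B)$ is the set of pairs $(a,b)\in A\times B$ with $a$ incomparable to $b$. The graph $G_n^k$ has vertex set $\mathrm{Inc}(A,B)$, with $(a,b)$ adjacent to $(x,y)$ iff $a<y$ and $x<b$ in $S_n^k$. A set $R\subseteq\mathrm{Inc}(A,B)$ is reversible if there is a linear extension $L$ of $S_n^k$ with $b<a$ in $L$ for all $(a,b)\in R$. *)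

(* Defs.v *)
From mathcomp Require Import all_boot.
Set Implicit Arguments. Unset Strict Implicit. Unset Printing Implicit Defensive.

(* Crown S_n^k: ground set A + B, with a_i = inl i, b_j = inr j, i, j : 'I_(n+k).
   a_i is incomparable to b_j iff j - i (mod n+k) lies in {0,...,k}. *)
Definition crown_elt (n k : nat) : finType := ('I_(n + k) + 'I_(n + k))%type.

Definition cdiff (m : nat) (i j : 'I_m) : nat := (j + m - i) %% m.

Definition inc_ab (n k : nat) (i j : 'I_(n + k)) : bool := cdiff i j <= k.

Definition crown_lt (n k : nat) (x y : crown_elt n k) : bool :=
  match x, y with
  | inl i, inr j => ~~ inc_ab i j
  | _, _ => false
  end.

Definition crown_le (n k : nat) (x y : crown_elt n k) : bool :=
  (x == y) || crown_lt x y.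

(* Inc(A,B), as index pairs (i, j) standing for (a_i, b_j) *)
Definition IncAB (n k : nat) : {set 'I_(n + k) * 'I_(n + k)} :=
  [set p | inc_ab p.1 p.2].

Definition Gadj (n k : nat) (u v : 'I_(n + k) * 'I_(n + k)) : bool :=
  crown_lt (inl u.1 : crown_elt n k) (inr v.2) &&
  crown_lt (inl v.1 : crown_elt n k) (inr u.2).

Definition independent (n k : nat) (S : {set 'I_(n + k) * 'I_(n + k)}) : Prop :=
  S \subset IncAB n k /\ forall u v, u \in S -> v \in S -> ~~ Gadj u v.

Definition linear_order (T : finType) (L : rel T) : Prop :=
  [/\ reflexive L, antisymmetric L, transitive L & total L].

Definition linear_extension (n k : nat) (L : rel (crown_elt n k)) : Prop :=
  linear_order L /\ forall x y, crown_le x y -> L x y.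

Definition reversible (n k : nat) (R : {set 'I_(n + k) * 'I_(n + k)}) : Prop :=
  exists L : rel (crown_elt n k), linear_extension L /\
    forall p, p \in R ->
      L (inr p.2) (inl p.1) && (inr p.2 != inl p.1 :> crown_elt n k).

(* Main.v *)
Require Import Defs.
From mathcomp Require Import all_boot zify.
From Stdlib Require Import Lia.
Set Implicit Arguments. Unset Strict Implicit. Unset Printing Implicit Defensive.

Section Arith.
Variable m : nat.
Implicit Types a b c : 'I_m.

Lemma cdiffE a b : cdiff a b = if a <= b then b - a else b + m - a.
Proof.
rewrite /cdiff; case: leqP => h.
  have -> : b + m - a = (b - a) + m by lia.
  by rewrite modnDr modn_small //; have := ltn_ord b; lia.
by rewrite modn_small //; have := ltn_ord a; have := ltn_ord b; lia.
Qed.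

Lemma cdiff_lt a b : cdiff a b < m.
Proof. rewrite cdiffE; have := ltn_ord a; have := ltn_ord b; case: (leqP a b); lia. Qed.

Lemma cdiff_add a b c : cdiff a b + cdiff b c = cdiff a c \/ cdiff a b + cdiff b c = cdiff a c + m.
Proof.
rewrite !cdiffE; have := ltn_ord a; have := ltn_ord b; have := ltn_ord c.
case: (leqP a b); case: (leqP b c); case: (leqP a c); lia.
Qed.

Lemma cdiff_eq0 a b : cdiff a b = 0 -> a = b.
Proof.
rewrite cdiffE; have := ltn_ord a; have := ltn_ord b => ? ?.
case: (leqP a b) => h e; apply: val_inj => /=; lia.
Qed.

Lemma cdiff_injl a b c : cdiff a c = cdiff b c -> a = b.
Proof.
move=> e; apply: cdiff_eq0; have := cdiff_add a b c; have := cdiff_lt a b; lia.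
Qed.

Lemma cdiff_injr a b c : cdiff c a = cdiff c b -> a = b.
Proof.
move=> e; apply: cdiff_eq0; have := cdiff_add c a b; have := cdiff_lt a b; lia.
Qed.

Lemma cdiff_surj b (d : 'I_m) : exists a, cdiff a b = d.
Proof.
have hb := ltn_ord b; have hd := ltn_ord d.
case: (leqP d b) => h1.
  have h : b - d < m by lia.
  exists (Ordinal h); rewrite cdiffE /=; case: leqP => h2; lia.
have h : b + m - d < m by lia.
exists (Ordinal h); rewrite cdiffE /=; case: leqP => h2; lia.
Qed.
End Arith.

Lemma card_interval (m lo hi : nat) : hi <= m ->
  #|[set d : 'I_m | lo <= d < hi]| = hi - lo.
Proof.
elim: hi => [|hi IH] hm.
  rewrite (_ : [set d : 'I_m | lo <= d < 0] = set0) ?cards0 //.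
  by apply/setP => d; rewrite !inE ltn0 andbF.
have hh : hi < m by [].
case: (leqP lo hi) => hl.
  rewrite (_ : [set d : 'I_m | lo <= d < hi.+1] = Ordinal hh |: [set d : 'I_m | lo <= d < hi]).
    rewrite cardsU1 IH ?(ltnW hm) // !inE /= ltnn andbF /=; lia.
  apply/setP => d; rewrite !inE -val_eqE /=; lia.
rewrite (_ : [set d : 'I_m | lo <= d < hi.+1] = set0) ?cards0; first lia.
apply/setP => d; rewrite !inE; apply/negbTE; rewrite negb_and -ltnNge ltnS.
case: (leqP lo d) => //= h; lia.
Qed.

Section Sumset.
Variables (m n k : nat).
Hypothesis Hmk : m = n + k.
Hypothesis Hn : 2 <= n.

Lemma sumset (O D : {set 'I_m}) :
  O != set0 -> (forall o : 'I_m, o \in O -> o <= k) ->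
  (forall d : 'I_m, (d \in D) = [exists o in O, (o < d) && (d < o + n)]) ->
  #|O| + (n - 2) <= #|D| /\
  ((exists d1 d2 d3 : 'I_m, [/\ d1 \in D, d3 \in D, d2 \notin D & d1 <= d2 <= d3]) ->
     #|O| + 2 * (n - 2) <= #|D|).
Proof.
move=> /set0Pn [o0 o0O] Ok HD.
case: (arg_maxnP (fun i : 'I_m => val i) o0O) => om omO omax0.
have omax o : o \in O -> o <= om by move/omax0.
have {}omO : om \in O by [].
pose sh (o : 'I_m) : 'I_m := insubd o o.+1.
have shv o : o \in O -> val (sh o) = o.+1.
  move=> oO; rewrite /sh val_insubd /=; have := Ok o oO; case: ifP => //; lia.
pose A1 := [set sh o | o in O].
have cA1 : #|A1| = #|O|.
  apply: card_in_imset => o1 o2 h1 h2 e; apply: val_inj => /=.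
  by have := shv _ h1; have := shv _ h2; rewrite e; lia.
have A1D : A1 \subset D.
  apply/subsetP => d /imsetP [o oO ->]; rewrite HD; apply/existsP; exists o.
  by rewrite oO shv //; lia.
have A1le d : d \in A1 -> d <= om.+1.
  by case/imsetP => o oO ->; rewrite shv //; have := omax o oO; lia.
pose A2 := [set d : 'I_m | om + 2 <= d < om + n].
have cA2 : #|A2| = n - 2 by rewrite card_interval; [lia | have := Ok om omO; lia].
have A2D : A2 \subset D.
  apply/subsetP => d; rewrite inE => hd; rewrite HD; apply/existsP; exists om.
  by rewrite omO; lia.
have dis12 : [disjoint A1 & A2].
  rewrite -setI_eq0; apply/eqP/setP => d; rewrite !inE; apply/negbTE.
  apply/negP => /andP [/A1le h1 h2]; lia.
have c12 : #|A1 :|: A2| = #|O| + (n - 2).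
  by rewrite cardsU; move: dis12; rewrite -setI_eq0 => /eqP ->; rewrite cards0 cA1 cA2 subn0.
split.
  by rewrite -c12; apply: subset_leq_card; rewrite subUset A1D A2D.
case=> d1 [d2 [d3 [d1D d3D d2D /andP [l12 l23]]]].
have d2n : forall o, o \in O -> (d2 <= o) || (o + n <= d2).
  move=> o oO; move: d2D; rewrite HD negb_exists => /forallP /(_ o).
  rewrite oO /= negb_and -!leqNgt; lia.
move: d1D; rewrite HD => /existsP [o1 /andP [o1O /andP [h11 h12]]].
move: d3D; rewrite HD => /existsP [o3 /andP [o3O /andP [h31 h32]]].
have o1lo : o1 + n <= d2 by have := d2n o1 o1O; lia.
have o3hi : d2 <= o3 by have := d2n o3 o3O; lia.
have o1P : o1 \in [pred o in O | o < d2] by rewrite inE o1O; lia.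
case: (arg_maxnP (fun i : 'I_m => val i) o1P) => L /andP [LO Ld2] Lmax0.
have Lmax o : o \in O -> o < d2 -> o <= L.
  by move=> oO ol; apply: Lmax0; rewrite /= oO ol.
have Llo : L + n <= d2 by have := d2n L LO; move: Ld2; clear; lia.
pose A3 := [set d : 'I_m | L + 2 <= d < L + n].
have cA3 : #|A3| = n - 2 by rewrite card_interval; [move: Hn; clear; lia | have := ltn_ord d2; move: Llo Hmk; clear; lia].
have A3D : A3 \subset D.
  apply/subsetP => d; rewrite inE => hd; rewrite HD; apply/existsP; exists L.
  by rewrite LO; move: hd; clear; lia.
have dis : [disjoint A1 :|: A2 & A3].
  rewrite -setI_eq0; apply/eqP/setP => d; rewrite !inE; apply/negbTE.
  apply/negP => /andP [/orP [/imsetP [o oO ->]|] h3].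
    move: h3; rewrite shv //.
    case: (ltnP o d2) => ho.
      by move=> h3; have := Lmax o oO ho; move: h3; clear; lia.
    by move=> h3; move: h3 ho Llo; clear; lia.
  by have := omax o3 o3O; move: h3 o3hi Llo; clear; lia.
have : #|(A1 :|: A2) :|: A3| = #|O| + 2 * (n - 2).
  by rewrite cardsU; move: dis; rewrite -setI_eq0 => /eqP ->; rewrite cards0 c12 cA3; clear; lia.
move=> <-; apply: subset_leq_card; rewrite !subUset A1D A2D A3D.
by [].
Qed.
End Sumset.

Section Count.
Variable U : finType.

Lemma card_setI_sum (A B : {set U}) : #|A :&: B| = \sum_(y in B) (y \in A).
Proof.
rewrite -sum1_card big_mkcond [RHS]big_mkcond /=; apply: eq_bigr => y _.
by rewrite inE; case: (y \in A); case: (y \in B).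
Qed.

Lemma card_sumb (A : {set U}) : #|A| = \sum_y (y \in A).
Proof. by rewrite -sum1_card big_mkcond /=; apply: eq_bigr => y _; case: (y \in A). Qed.

Lemma sum_neq (A : {set U}) x0 : x0 \in A -> \sum_(x in A) (x != x0) = #|A| - 1.
Proof.
move=> x0A; rewrite (cardsD1 x0 A) x0A add1n subSS.
have -> : A :\ x0 = [set~ x0] :&: A by apply/setP => y; rewrite !inE.
rewrite (card_setI_sum [set~ x0]) /= subn0.
by apply: eq_bigr => y _; rewrite !inE.
Qed.

Lemma sum_le_minus (A : {set U}) (f : U -> bool) x0 : x0 \in A -> ~~ f x0 ->
  \sum_(x in A) f x <= #|A| - 1.
Proof.
move=> x0A nf; rewrite -(sum_neq x0A); apply: leq_sum => x _.
by case: (eqVneq x x0) => [->|]; [rewrite (negbTE nf) | case: (f x)].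
Qed.

Lemma sum_le_card (A : {set U}) (f : U -> bool) : \sum_(x in A) f x <= #|A|.
Proof. by rewrite -sum1_card; apply: leq_sum => x _; case: (f x). Qed.

Lemma antisym_sum (A : {set U}) (r : rel U) : (forall x, ~~ r x x) ->
  (forall x y, r x y -> r y x -> False) -> (forall x y, r x y -> x \in A) ->
  2 * \sum_x \sum_(y in A) r x y <= #|A| * (#|A| - 1).
Proof.
move=> irr anti dom.
have -> : \sum_x \sum_(y in A) r x y = \sum_(x in A) \sum_(y in A) r x y.
  rewrite [RHS]big_mkcond /=; apply: eq_bigr => x _; case: ifP => // xA.
  by apply: big1 => y _; case: (boolP (r x y)) => // /dom; rewrite xA.
rewrite mul2n -addnn {2}(exchange_big) -big_split /=.
rewrite -sum_nat_const; apply: leq_sum => x xA.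
rewrite -big_split /= -(sum_neq xA); apply: leq_sum => y yA.
case: (eqVneq y x) => [->|ne]; first by rewrite (negbTE (irr x)).
case: (boolP (r x y)) => hxy; case: (boolP (r y x)) => hyx //.
by case: (anti _ _ hxy hyx).
Qed.
End Count.

Lemma arA (n k s p q X Y : nat) : 3 <= n -> p + q = n + k ->
  s + (n - 2) * p + (n - 2) <= X + Y -> 2 * X <= p * (p - 1) -> Y <= q * p ->
  2 * (s + (n - 2)) <= k.+1 * k.+2.
Proof.
move=> Hn Hpq H1 H2 H3.
have Hq : q = n + k - p by lia.
subst q.
case: (leqP p k.+1) => hp; nia.
Qed.
Lemma arB (n k s p q X Y : nat) : 3 <= n -> p + q = n + k -> 1 <= p ->
  s + (n - 2) * p <= X + Y -> 2 * X <= p * (p - 1) -> Y <= q * (p - 1) ->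
  2 * (s + (n - 2)) <= k.+1 * k.+2.
Proof.
move=> Hn Hpq Hp H1 H2 H3.
have Hq : q = n + k - p by lia.
subst q.
case: (leqP p k.+2) => hp; nia.
Qed.
Lemma fin (n k s : nat) : 3 <= n -> 2 * (s + (n - 2)) <= k.+1 * k.+2 -> s <= (k.+1 * k.+2) %/ 2 + 2 - n.
Proof.
move=> Hn H.
have ev : 2 %| k.+1 * k.+2.
  by rewrite dvdn2 oddM /= negbK; case: (odd k).
move: H; rewrite -(divnK ev); move: ((k.+1 * k.+2) %/ 2) => t; lia.
Qed.

Section Crown.
Variables (n k : nat) (S : {set 'I_(n + k) * 'I_(n + k)}).
Hypothesis Hn : 3 <= n.
Hypothesis HSinc : S \subset IncAB n k.
Hypothesis HSind : forall u v, u \in S -> v \in S -> ~~ Gadj u v.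
Local Notation T := ('I_(n + k)).

Definition R (j y : T) : bool := [exists x, ((x, j) \in S) && ~~ @inc_ab n k x y].
Definition Ij (j : T) : {set T} := [set x | (x, j) \in S].
Definition Out (j : T) : {set T} := [set y | R j y].
Definition Vp : {set T} := [set j | [exists x, (x, j) \in S]].
Definition good (j : T) : bool := [forall u, forall v, forall w,
  R j u ==> R j w ==> (cdiff u j <= cdiff v j <= cdiff w j) ==> R j v].

Lemma inS x j : (x, j) \in S -> cdiff x j <= k.
Proof. by move=> h; move/subsetP: HSinc => /(_ _ h); rewrite inE. Qed.

Lemma R_irr j : ~~ R j j.
Proof.
apply/existsP => [[x /andP [h1 h2]]]; move: h2; rewrite /inc_ab.
by have := inS h1; rewrite leqNgt => ->.
Qed.

Lemma R_anti j y : R j y -> R y j -> False.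
Proof.
move=> /existsP [x /andP [h1 h2]] /existsP [x' /andP [h1' h2']].
by have := HSind h1 h1'; rewrite /Gadj /crown_lt /= h2 h2'.
Qed.

Lemma nincE (x y j : T) : cdiff x j <= k ->
  (~~ @inc_ab n k x y) = (cdiff x j < cdiff y j < cdiff x j + n).
Proof.
move=> h; rewrite /inc_ab; have := cdiff_add x y j.
have := cdiff_lt x y; have := cdiff_lt y j; have := cdiff_lt x j.
move: h; clear; lia.
Qed.

Lemma count_out j : j \in Vp ->
  #|Ij j| + (n - 2) <= #|Out j| /\ (~~ good j -> #|Ij j| + 2 * (n - 2) <= #|Out j|).
Proof.
move=> jV.
pose dj (y : T) : T := Ordinal (cdiff_lt y j).
have djI : injective dj by move=> y1 y2 /(congr1 val) /= /cdiff_injl.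
have [] := @sumset (n + k) n k erefl (ltnW Hn) (dj @: Ij j) (dj @: Out j).
- move: jV; rewrite inE => /existsP [x hx]; apply/set0Pn; exists (dj x).
  by apply: imset_f; rewrite inE.
- by move=> o /imsetP [x]; rewrite inE => /inS h -> /=.
- move=> d; apply/imsetP/existsP.
    case=> y; rewrite inE => /existsP [x /andP [hx hxy]] ->.
    exists (dj x); rewrite imset_f ?inE //=.
    by rewrite -nincE // (inS hx).
  case=> o /andP [/imsetP [x]]; rewrite inE => hx -> /= hd.
  have [y hy] := cdiff_surj j d.
  exists y; last by apply: val_inj.
  rewrite inE; apply/existsP; exists x; rewrite hx /= (@nincE x y j (inS hx)).
  by rewrite hy.
rewrite !card_imset // => H1 H2; split => // ng; apply: H2.
move: ng => /forallPn [u /forallPn [v /forallPn [w]]].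
rewrite negb_imply => /andP [hu]; rewrite negb_imply => /andP [hw].
rewrite negb_imply => /andP [hv hnv].
exists (dj u), (dj v), (dj w); split => //.
- by apply: imset_f; rewrite inE.
- by apply: imset_f; rewrite inE.
- by rewrite mem_imset // inE.
Qed.
Definition cyclic (C : {set T}) : bool :=
  (C != set0) && [forall j in C, [exists y in C, R j y]].

Lemma goodP j u v w : good j -> R j u -> R j w -> cdiff u j <= cdiff v j <= cdiff w j -> R j v.
Proof.
move=> /forallP /(_ u) /forallP /(_ v) /forallP /(_ w) h hu hw hv.
by move: h; rewrite hu hw hv.
Qed.

Lemma right_int j z y1 y2 : good j -> R j z -> ~~ R j y1 ->
  cdiff z j < cdiff z y2 <= cdiff z y1 -> ~~ R j y2.
Proof.
move=> g hz h1 hc; apply/negP => h2; move/negP: h1; apply.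
apply: (goodP g hz h2).
have := cdiff_add z y1 j; have := cdiff_add z y2 j.
have := cdiff_lt z y1; have := cdiff_lt z y2; have := cdiff_lt y1 j; have := cdiff_lt y2 j.
move: hc; clear; lia.
Qed.

Lemma left_int j z y1 y2 : good j -> R j z -> ~~ R j y1 ->
  0 < cdiff z y1 <= cdiff z y2 -> cdiff z y2 <= cdiff z j -> ~~ R j y2.
Proof.
move=> g hz h1 hc hc'; apply/negP => h2; move/negP: h1; apply.
apply: (goodP g h2 hz).
have := cdiff_add z y1 j; have := cdiff_add z y2 j.
have := cdiff_lt z y1; have := cdiff_lt z y2; have := cdiff_lt y1 j; have := cdiff_lt y2 j.
move: hc hc'; clear; lia.
Qed.

Lemma lemmaA (C : {set T}) (z : T) : cyclic C ->
  (forall C', cyclic C' -> #|C| <= #|C'|) -> (forall j, j \in C -> good j) ->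
  exists2 j, j \in C & ~~ R j z.
Proof.
move=> cC minC gC.
case/boolP: [exists j in C, ~~ R j z] => [/exists_inP [j jC hj]|]; first by exists j.
rewrite negb_exists_in => /forall_inP hz; exfalso.
have {}hz j : j \in C -> R j z by move=> jC; have := hz j jC; rewrite negbK.
move: (cC) => /andP [/set0Pn [a0 a0C] /forall_inP cyc].
case: (arg_minnP (fun i => cdiff z i) a0C) => a aC amin.
have {}amin i : i \in C -> cdiff z a <= cdiff z i by move/amin.
pose U := [set w in C | R a w].
have UC : U \subset C by apply/subsetP => w; rewrite inE => /andP [].
have aU : a \notin U by rewrite inE (negbTE (R_irr a)) andbF.
have cU : cyclic U.
  apply/andP; split.
    have /exists_inP [y yC hy] := cyc a aC.
    by apply/set0Pn; exists y; rewrite inE yC hy.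
  apply/forall_inP => w; rewrite inE => /andP [wC aw].
  have /exists_inP [w' w'C ww'] := cyc w wC.
  apply/exists_inP; exists w' => //; rewrite inE w'C /=.
  case/boolP: (R a w') => // naw'.
  have za : cdiff z a < cdiff z w.
    have := amin w wC; rewrite leq_eqVlt => /orP [/eqP e|//].
    by move: aw; rewrite -(cdiff_injr e) (negbTE (R_irr a)).
  have h1 : cdiff z w' < cdiff z w.
    rewrite ltnNge; apply/negP => hle.
    have := right_int (gC a aC) (hz a aC) naw' (y2 := w).
    by rewrite za hle aw => /(_ isT).
  have nwa : ~~ R w a by apply/negP => /(R_anti aw).
  have za0 : 0 < cdiff z a.
    rewrite lt0n; apply/negP => /eqP /cdiff_eq0 e.
    by move: (hz a aC); rewrite -e (negbTE (R_irr z)).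
  have := left_int (gC w wC) (hz w wC) nwa (y2 := w').
  by rewrite za0 amin // (ltnW h1) ww' => /(_ isT isT).
have := minC U cU.
have : #|U| < #|C| by apply: proper_card; rewrite properE UC /=; apply/subsetPn; exists a.
by move=> h1 h2; move: (leq_trans h1 h2); rewrite ltnn.
Qed.
Definition E : rel (crown_elt n k) := fun u v =>
  match u, v with
  | inl x, inr y => ~~ @inc_ab n k x y
  | inr j, inl x => (x, j) \in S
  | _, _ => false
  end.

Lemma connect_step (U : finType) (e : rel U) a b : connect e a b -> a != b ->
  exists2 a', e a a' & connect e a' b.
Proof.
move=> /connectP [[|a' p]] /=; first by move=> _ ->; rewrite eqxx.
move=> /andP [h1 h2] -> _; exists a' => //; apply/connectP; exists p => //.
Qed.

Lemma E_nocycle : (forall C, ~~ cyclic C) -> forall u v, E u v -> ~~ connect E v u.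
Proof.
move=> noC u v euv; apply/negP => cvu.
pose CE := [set w | connect E w u && connect E v w].
have succ w : w \in CE -> exists2 w', w' \in CE & E w w'.
  rewrite inE => /andP [wu vw]; case: (eqVneq w u) => [->|ne].
    by exists v => //; rewrite inE cvu connect0.
  have [w' ww' w'u] := connect_step wu ne; exists w' => //.
  by rewrite inE w'u (connect_trans vw (connect1 ww')).
pose CR := [set j | inr j \in CE].
have : cyclic CR; last by rewrite (negbTE (noC CR)).
apply/andP; split.
  have vC : v \in CE by rewrite inE cvu connect0.
  have inrC w : w \in CE -> exists y, inr y \in CE.
    case: w => [x|y] wC; last by exists y.
    have [w' w'C ew'] := succ _ wC.
    by case: w' w'C ew' => // y w'C _; exists y.
  by have [y yC] := inrC v vC; apply/set0Pn; exists y; rewrite inE.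
apply/forall_inP => j; rewrite inE => jC.
have [w1 w1C e1] := succ _ jC.
case: w1 w1C e1 => [x|//] w1C e1.
have [w2 w2C e2] := succ _ w1C.
case: w2 w2C e2 => [//|y] w2C e2.
apply/exists_inP; exists y; first by rewrite inE.
by apply/existsP; exists x; apply/andP; split.
Qed.
Lemma rev_of_nocycle : (forall C, ~~ cyclic C) -> reversible S.
Proof.
move=> noC.
pose rk (u : crown_elt n k) := #|[set w | connect E w u]|.
pose N := #|crown_elt n k|.
pose key (u : crown_elt n k) := rk u * N + enum_rank u.
have Erk u v : E u v -> rk u < rk v.
  move=> euv; apply: proper_card; rewrite properE; apply/andP; split.
    by apply/subsetP => w; rewrite !inE => h; apply: (connect_trans h (connect1 euv)).
  apply/subsetPn; exists v; first by rewrite inE connect0.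
  by rewrite inE; apply: E_nocycle.
have Ekey u v : E u v -> key u < key v.
  move=> /Erk h; rewrite /key.
  have h1 : enum_rank u < N by [].
  apply: (@leq_trans ((rk u).+1 * N)); first by rewrite mulSn; lia.
  apply: (leq_trans (leq_mul h (leqnn N))); apply: leq_addr.
have keyI u v : key u = key v -> u = v.
  move=> e; apply: enum_rank_inj; apply: val_inj.
  have := congr1 (fun x => x %% N) e; rewrite /key /= !modnMDl !modn_small //.
exists (fun u v => key u <= key v); split; first split.
- split.
  + by move=> x; apply: leqnn.
  + by move=> x y /andP [h1 h2]; apply: keyI; apply/eqP; rewrite eqn_leq h1 h2.
  + by move=> x y z h1 h2; apply: leq_trans h1 h2.
  + by move=> x y; apply: leq_total.
- move=> x y /orP [/eqP ->|]; first by apply: leqnn.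
  by case: x => [i|i] //; case: y => [j|j] // h; apply: ltnW; apply: Ekey.
- move=> p pS; apply/andP; split => //.
  by apply: ltnW; apply: Ekey; rewrite /E; case: p pS.
Qed.
Lemma R_Vp j y : R j y -> j \in Vp.
Proof. by move=> /existsP [x /andP [h _]]; rewrite inE; apply/existsP; exists x. Qed.

Lemma Ij0 j : j \notin Vp -> #|Ij j| = 0.
Proof.
move=> h; apply/eqP; rewrite cards_eq0; apply/eqP/setP => x; rewrite !inE.
by apply/negP => hx; move: h; rewrite inE => /existsP; apply; exists x.
Qed.

Lemma cyclic_Vp C j : cyclic C -> j \in C -> j \in Vp.
Proof.
by move=> /andP [_ /forall_inP h] /h /exists_inP [y _ /R_Vp].
Qed.
End Crown.


Theorem theorem1p6 (n k : nat) (S : {set 'I_(n + k) * 'I_(n + k)}) :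
  3 <= n -> n <= k ->
  independent S -> ~ reversible S ->
  #|S| <= (k.+1 * k.+2) %/ 2 + 2 - n.
Proof.
move=> Hn _ [HSinc HSind] nrev.
have [C0 cC0] : exists C, cyclic S C.
  case: (boolP [exists C, cyclic S C]) => [/existsP //|].
  rewrite negb_exists => /forallP h; case: nrev.
  by apply: rev_of_nocycle.
case: (arg_minnP (fun C : {set 'I_(n + k)} => #|C|) cC0) => C cC minC.
apply: fin => //.
pose V := Vp S.
pose X := \sum_j \sum_(y in V) R S j y.
pose Y := \sum_j \sum_(y in ~: V) R S j y.
have hS : #|S| = \sum_j #|Ij S j|.
  rewrite (card_sumb S) (eq_bigr (fun p => nat_of_bool ((p.1, p.2) \in S))); last by case.
  rewrite -(pair_bigA _ (fun x j => nat_of_bool ((x, j) \in S))) /= exchange_big /=.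
  by apply: eq_bigr => j _; rewrite card_sumb; apply: eq_bigr => x _; rewrite inE.
have hOut j : #|Out S j| = \sum_(y in V) R S j y + \sum_(y in ~: V) R S j y.
  rewrite card_sumb (bigID (fun y => y \in V)) /=; congr (_ + _).
    by apply: eq_bigr => y _; rewrite inE.
  by apply: eq_big => [y|y _]; rewrite !inE.
have hOuts : \sum_j #|Out S j| = X + Y by rewrite -big_split; apply: eq_bigr.
have hX : 2 * X <= #|V| * (#|V| - 1).
  apply: antisym_sum; [exact: R_irr | exact: R_anti | exact: R_Vp].
have hVq : #|V| + #|~: V| = n + k by rewrite cardsC card_ord.
have hYsw : Y = \sum_(y in ~: V) \sum_(j in V) R S j y.
  rewrite /Y exchange_big /=; apply: eq_bigr => y _.
  rewrite [RHS]big_mkcond /=; apply: eq_bigr => j _; case: ifP => // jV.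
  by case: (boolP (R S j y)) => // /R_Vp; rewrite /V jV.
have hC0 : C != set0 by case/andP: cC.
case: (boolP [forall j in C, good S j]) => [/forall_inP gC|].
-
  have hY : Y <= #|~: V| * (#|V| - 1).
    rewrite hYsw -sum_nat_const; apply: leq_sum => z _.
    have [j jC hj] := lemmaA HSinc HSind z cC (fun C' h => minC C' h) gC.
    by apply: (sum_le_minus (x0 := j)) => //; apply: cyclic_Vp cC jC.
  have hp : 1 <= #|V|.
    move: hC0 => /set0Pn [j jC]; rewrite card_gt0; apply/set0Pn; exists j.
    by apply: cyclic_Vp cC jC.
  apply: (@arB n k _ #|V| #|~: V| X Y) => //.
  rewrite hS -hOuts.
  have -> : (n - 2) * #|V| = \sum_j (n - 2) * (j \in V).
    by rewrite -big_distrr /= -card_sumb.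
  rewrite -big_split; apply: leq_sum => j _ /=.
  case: (boolP (j \in V)) => jV.
    by rewrite muln1; case: (count_out Hn HSinc jV).
  by rewrite (Ij0 jV) muln0.
- rewrite negb_forall_in => /existsP [j0 /andP [j0C ng]].
  have j0V : j0 \in V by apply: cyclic_Vp cC j0C.
  have hY : Y <= #|~: V| * #|V|.
    rewrite hYsw -sum_nat_const; apply: leq_sum => z _; apply: sum_le_card.
  apply: (@arA n k _ #|V| #|~: V| X Y) => //.
  rewrite hS -hOuts.
  have -> : (n - 2) * #|V| = \sum_j (n - 2) * (j \in V).
    by rewrite -big_distrr /= -card_sumb.
  rewrite -big_split (bigD1 j0) // [X in _ <= X](bigD1 j0) //= addnAC.
  apply: leq_add.
    rewrite j0V muln1 -addnA addnn -mul2n.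
    by case: (count_out Hn HSinc j0V) => _ /(_ ng).
  apply: leq_sum => j _ /=.
  case: (boolP (j \in V)) => jV.
    by rewrite muln1; case: (count_out Hn HSinc jV).
  by rewrite (Ij0 jV) muln0.
Qed.
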